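(* For every integer $\ell\geq 1$, every finite digraph $G$ with $\delta^+(G)\geq (1+\sqrt{5})\ell$ contains $S^-_{2,\ell}$ as a subgraph.
   Context: Digraphs are finite, have no loops and no multiple copies of the same edge, but may contain two edges in opposite directions between a pair of vertices. $\delta^+(G)$ is the minimum out-degree of $G$. $S^-_{k,\ell}$ denotes the $(k-1)$-subdivision of the in-star with $\ell$ leaves, i.e. the oriented tree consisting of a centre vertex and $\ell$ directed paths of length $k$ each ending at the centre, pairwise sharing only the centre. Thus $S^-_{2,\ell}$ consists of a centre $c$ and $\ell$ vertex-disjoint (apart from $c$) directed paths $x_i\to a_i\to c$. Containing it as a subgraph means having a subgraph isomorphic to it. *)

(* Defs.v *)
From Stdlib Require Import Reals.
From mathcomp Require Import all_boot.
Set Implicit Arguments. Unset Strict Implicit. Unset Printing Implicit Defensive.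

(* A digraph on a finite vertex type V is an edge relation E : rel V.
   No multiple edges is automatic; no loops is the hypothesis [irreflexive E];
   opposite edges u->v and v->u are allowed. *)
Definition outdeg (V : finType) (E : rel V) (v : V) : nat := #|[set w | E v w]|.

(* The (k-1)-subdivision of the in-star with l leaves, S^-_{k,l}:
   vertex None is the centre; Some (i, j) is the j-th vertex (j < k) on the
   i-th directed path; edges (i,j) -> (i,j+1) and (i,k-1) -> centre. *)
Definition instar_vertex (k l : nat) : finType := option ('I_l * 'I_k).

Definition instar_edge (k l : nat) : rel (instar_vertex k l) :=
  fun u v =>
    match u, v with
    | Some (i, j), Some (i', j') => (i == i') && (j.+1 == j')
    | Some (_, j), None => j.+1 == k
    | None, _ => false
    end.

Definition contains_subgraph (W : finType) (EH : rel W) (V : finType) (E : rel V) : Prop :=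
  exists f : W -> V, injective f /\ forall u v, EH u v -> E (f u) (f v).

(* Main.v *)
Require Import Defs.
From Stdlib Require Import Reals.
From mathcomp Require Import all_boot zify.
Set Implicit Arguments. Unset Strict Implicit. Unset Printing Implicit Defensive.
Section DC.
Variable V : finType.
Lemma card_sum (Y : {set V}) (P : pred V) :
  #|[set y in Y | P y]| = \sum_(y in Y) (P y : nat).
Proof.
rewrite -sum1_card (eq_bigl (fun y => (y \in Y) && P y)); last by move=> y; rewrite inE.
by rewrite big_mkcondr; apply: eq_bigr => y _; case: (P y).
Qed.

Lemma card_sum' (P : pred V) : #|[set y | P y]| = \sum_y (P y : nat).
Proof.
rewrite -sum1_card (eq_bigl (fun y => P y)); last by move=> y; rewrite inE.
by rewrite big_mkcond; apply: eq_bigr => y _; case: (P y).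
Qed.

Lemma dc (R : rel V) (X Y : {set V}) :
  \sum_(x in X) #|[set y in Y | R x y]| = \sum_(y in Y) #|[set x in X | R x y]|.
Proof.
under eq_bigr do rewrite card_sum.
rewrite exchange_big /=; apply: eq_bigr => y _; by rewrite card_sum.
Qed.

Lemma sum_setU_le (X Y : {set V}) (h : V -> nat) :
  \sum_(x in X :|: Y) h x <= \sum_(x in X) h x + \sum_(x in Y) h x.
Proof.
rewrite (big_setID X) /=.
have -> : (X :|: Y) :&: X = X by apply/setIidPr/subsetUl.
have -> : (X :|: Y) :\: X = Y :\: X by rewrite setDUl setDv set0U.
rewrite leq_add2l [X in _ <= X](big_setID X) /=; exact: leq_addl.
Qed.

Lemma sum_sub_le (X Y : {set V}) (h : V -> nat) : X \subset Y ->
  \sum_(x in X) h x <= \sum_(x in Y) h x.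
Proof.
move=> XY; rewrite [X in _ <= X](big_setID X) /=.
by rewrite (setIidPr XY) leq_addr.
Qed.
End DC.
Section Main.
Variables (V : finType) (E : rel V).
Hypothesis irrE : irreflexive E.

Definition good c (p : V * V) := [&& E p.1 p.2, E p.2 c & p.1 != c].
Definition disj (p q : V * V) := [&& p.1 != q.1, p.1 != q.2, p.2 != q.1 & p.2 != q.2].
Definition matching c (M : {set V * V}) :=
  [forall p in M, good c p] && [forall p in M, [forall q in M, (p != q) ==> disj p q]].

Lemma matchingP c (M : {set V * V}) : matching c M ->
  (forall p, p \in M -> good c p) /\
  (forall p q, p \in M -> q \in M -> p != q -> disj p q).
Proof.
case/andP=> /forall_inP H1 /forall_inP H2; split=> // p q pM qM pq.
by move: (H2 p pM) => /forall_inP /(_ q qM) /implyP; apply.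
Qed.

Lemma matchingI c (M : {set V * V}) : (forall p, p \in M -> good c p) ->
  (forall p q, p \in M -> q \in M -> p != q -> disj p q) -> matching c M.
Proof.
move=> H1 H2; apply/andP; split; apply/forall_inP=> // p pM.
by apply/forall_inP=> q qM; apply/implyP; apply: H2.
Qed.

Lemma embed l c (M : {set V * V}) : matching c M -> l <= #|M| ->
  contains_subgraph (@instar_edge 2 l) E.
Proof.
move=> /matchingP [Hg Hd] lM.
pose s := enum M.
have ss : size s = #|M| by rewrite cardE.
pose pr (i : 'I_l) := nth (c, c) s i.
have prM i : pr i \in M.
  by rewrite -mem_enum; apply: mem_nth; rewrite ss (leq_trans (ltn_ord i)).
have prinj i j : pr i = pr j -> i = j.
  move=> e; apply: val_inj; move: e; rewrite /pr => /eqP.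
  rewrite nth_uniq ?enum_uniq ?ss ?(leq_trans (ltn_ord _)) //; exact/eqP.
pose f (v : instar_vertex 2 l) : V :=
  match v with None => c | Some (i, j) => if val j == 0 then (pr i).1 else (pr i).2 end.
exists f; split.
  have gi i := Hg _ (prM i).
  have neq12 i : (pr i).1 != (pr i).2.
    case/and3P: (gi i) => e _ _; apply/eqP => h; move: e; rewrite h irrE //.
  have neq1c i : (pr i).1 != c by case/and3P: (gi i).
  have neq2c i : (pr i).2 != c.
    case/and3P: (gi i) => _ e _; apply/eqP => h; move: e; rewrite h irrE //.
  have fi i j : f (Some (i, j)) = (pr i).1 \/ f (Some (i, j)) = (pr i).2.
    rewrite /=; case: ifP => _; [left|right] => //.
  move=> [[i j]|] [[i' j']|] //=.
  - move=> e.
    have [ii'|ii'] := eqVneq i i'.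
      subst i'; congr (Some (_, _)); apply: val_inj.
      move: e; case: (j) => [[|[|]]] //= _; case: (j') => [[|[|]]] //= _ h.
      + by move: (neq12 i); rewrite h eqxx.
      + by move: (neq12 i); rewrite h eqxx.
    have pd : pr i != pr i' by apply/eqP => /prinj /eqP; rewrite (negbTE ii').
    case/and4P: (Hd _ _ (prM i) (prM i') pd) => h1 h2 h3 h4.
    move: e; case: ifP => _; case: ifP => _ h; by [rewrite h eqxx in h1 | rewrite h eqxx in h2 |
      rewrite h eqxx in h3 | rewrite h eqxx in h4].
  - by case: ifP => _ h; [move: (neq1c i) | move: (neq2c i)]; rewrite h eqxx.
  - by case: ifP => _ h; [move: (neq1c i') | move: (neq2c i')]; rewrite h eqxx.
move=> [[i j]|] [[i' j']|] //=.
- case/andP=> /eqP <- /eqP; case: (j) => [[|[|]]] //= _; case: (j') => [[|[|]]] //= _ _.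
  by case/and3P: (Hg _ (prM i)).
- case: (j) => [[|[|]]] //= _ _.
  by case/and3P: (Hg _ (prM i)).
Qed.

Lemma disjC p q : disj p q = disj q p.
Proof.
rewrite /disj (eq_sym q.1 p.1) (eq_sym q.1 p.2) (eq_sym q.2 p.1) (eq_sym q.2 p.2).
by case: (p.1 != q.1); case: (p.1 != q.2); case: (p.2 != q.1); case: (p.2 != q.2).
Qed.

Lemma disj_neq p q : disj p q -> p != q.
Proof. by apply: contraL => /eqP ->; rewrite /disj eqxx. Qed.

Definition indeg (v : V) := #|[set u | E u v]|.

Section PerC.
Variables (l D : nat) (c : V) (M : {set V * V}).
Hypotheses (outD : forall v, #|[set w | E v w]| = D) (matM : matching c M)
  (maxM : forall M', matching c M' -> #|M'| <= #|M|) (kl : #|M| < l).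

Let goodM := (matchingP matM).1.
Let disjM := (matchingP matM).2.

Definition VM := [set p.1 | p in M] :|: [set p.2 | p in M].

Lemma cardVM : #|VM| <= 2 * #|M|.
Proof.
rewrite mul2n -addnn (leq_trans (leq_of_leqif (leq_card_setU _ _))) //.
by rewrite leq_add // leq_imset_card.
Qed.

Lemma VM1 p : p \in M -> p.1 \in VM.
Proof. by move=> pM; apply/setUP; left; apply: imset_f. Qed.
Lemma VM2 p : p \in M -> p.2 \in VM.
Proof. by move=> pM; apply/setUP; right; apply: imset_f. Qed.

Lemma VMP x : x \in VM -> exists2 p, p \in M & (x = p.1) \/ (x = p.2).
Proof. by case/setUP => /imsetP [p pM ->]; exists p => //; [left|right]. Qed.

Lemma notVM x r : x \notin VM -> r \in M -> (x != r.1) && (x != r.2).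
Proof.
move=> xn rM; apply/andP; split; apply/eqP => e; move: xn; rewrite e.
  by rewrite VM1. by rewrite VM2.
Qed.

Lemma good2 q : good c q -> q.2 != c.
Proof. by case/and3P => _ e _; apply/eqP => h; move: e; rewrite h irrE. Qed.
Lemma good1 q : good c q -> q.1 != c.
Proof. by case/and3P. Qed.
Lemma good12 q : good c q -> q.1 != q.2.
Proof. by case/and3P => e _ _; apply/eqP => h; move: e; rewrite h irrE. Qed.

Lemma cnotVM : c \notin VM.
Proof.
apply/negP => /VMP [p pM [] e].
  by move: (good1 (goodM pM)); rewrite -e eqxx.
by move: (good2 (goodM pM)); rewrite -e eqxx.
Qed.

Lemma no_bigger M' : matching c M' -> #|M'| = #|M|.+1 -> False.
Proof. by move=> /maxM h e; move: h; rewrite e ltnn. Qed.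

Lemma add1 q : good c q -> q.1 \notin VM -> q.2 \notin VM -> False.
Proof.
move=> gq n1 n2.
have dq r : r \in M -> disj q r.
  move=> rM; case/andP: (notVM n1 rM) => h1 h2; case/andP: (notVM n2 rM) => h3 h4.
  by rewrite /disj h1 h2 h3 h4.
have qM : q \notin M by apply/negP => /VM1; rewrite (negbTE n1).
apply: (@no_bigger (q |: M)); last by rewrite cardsU1 qM.
apply: matchingI.
  by move=> p /setU1P [->|pM] //; exact: goodM.
move=> p r /setU1P [->|pM] /setU1P [->|rM]; rewrite ?eqxx // => pr.
- exact: dq.
- by rewrite disjC; apply: dq.
- exact: disjM.
Qed.

Lemma swap p q1 q2 : p \in M -> good c q1 -> good c q2 -> disj q1 q2 ->
  (forall r, r \in M -> r != p -> disj q1 r && disj q2 r) -> False.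
Proof.
move=> pM g1 g2 d12 dr.
have nq2 : q2 \notin M :\ p.
  apply/negP => /setD1P [q2p q2M]; case/andP: (dr _ q2M q2p) => _.
  by move/disj_neq; rewrite eqxx.
have nq1 : q1 \notin q2 |: (M :\ p).
  apply/negP => /setU1P [e|/setD1P [q1p q1M]].
    by move: (disj_neq d12); rewrite e eqxx.
  by case/andP: (dr _ q1M q1p) => /disj_neq; rewrite eqxx.
apply: (@no_bigger (q1 |: (q2 |: (M :\ p)))).
  apply: matchingI.
    move=> r /setU1P [->|/setU1P [->|/setD1P [_ rM]]] //; exact: goodM.
  move=> r s /setU1P [->|/setU1P [->|/setD1P [rp rM]]]
             /setU1P [->|/setU1P [->|/setD1P [sp sM]]]; rewrite ?eqxx // => rs.
  - by case/andP: (dr _ sM sp).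
  - by rewrite disjC.
  - by case/andP: (dr _ sM sp).
  - by rewrite disjC; case/andP: (dr _ rM rp).
  - by rewrite disjC; case/andP: (dr _ rM rp).
  - exact: disjM.
rewrite cardsU1 nq1 cardsU1 nq2 /= add1n.
by move: (cardsD1 p M); rewrite pM add1n => ->.
Qed.

Lemma C1 a x : E a c -> a \notin VM -> E x a -> x != c -> x \in VM.
Proof.
move=> ac an xa xc; apply: contraT => xn; exfalso.
by apply: (@add1 (x, a)) => //; rewrite /good /= xa ac xc.
Qed.

Lemma C2 p w w' : p \in M -> E w c -> w \notin VM -> E w' c -> w' \notin VM ->
  E p.1 w -> E p.2 w' -> w = w'.
Proof.
move=> pM wc wn w'c w'n e1 e2; apply/eqP; apply: contraT => ww; exfalso.
have gp := goodM pM.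
apply: (@swap p (p.1, w) (p.2, w')) => //.
- by rewrite /good /= e1 wc good1.
- by rewrite /good /= e2 w'c good2.
- case/andP: (notVM w'n pM) => h1 h2; case/andP: (notVM wn pM) => h3 h4.
  by rewrite /disj /= good12 // eq_sym h1 h4 ww.
- move=> r rM rp; case/and4P: (disjM pM rM (negbT (introF eqP (fun e => (negP rp) (introT eqP (esym e)))))) => h1 h2 h3 h4.
  case/andP: (notVM wn rM) => h5 h6; case/andP: (notVM w'n rM) => h7 h8.
  by rewrite /disj /= h1 h2 h3 h4 h5 h6 h7 h8.
Qed.

Lemma C3 p : p \in M -> E p.1 c -> 2 * l <= indeg p.1 -> 2 * l <= indeg p.2 -> False.
Proof.
move=> pM p1c b1 b2.
have gp := goodM pM.
pose F z := [set y | E y z & (y \notin VM) && (y != c)].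
have Fbig z : z \in VM -> 2 * l <= indeg z -> 1 < #|F z|.
  move=> zV bz.
  have sub : [set u | E u z] \subset F z :|: ((VM :\ z) :|: [set c]).
    apply/subsetP => u; rewrite in_set => uz.
    have uz' : u != z by apply/eqP => e; move: uz; rewrite e irrE.
    rewrite in_setU in_setU in_setD1 in_set1 /F in_set uz uz' /=.
    by case: (u \in VM); case: (u == c).
  have h1 := subset_leq_card sub.
  have h2 := leq_of_leqif (leq_card_setU (F z) ((VM :\ z) :|: [set c])).
  have h3 := leq_of_leqif (leq_card_setU (VM :\ z) [set c]).
  have h4 := cardsD1 z VM; rewrite zV in h4.
  have h5 := cardVM; rewrite cards1 in h3.
  rewrite /indeg in bz; lia.
have [y' y'F] : exists y', y' \in F p.2.
  by apply/set0Pn; rewrite -card_gt0 (ltn_trans _ (Fbig _ (VM2 pM) b2)).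
have [y yF] : exists y, y \in F p.1 :\ y'.
  apply/set0Pn; rewrite -card_gt0.
  have := cardsD1 y' (F p.1); have := Fbig _ (VM1 pM) b1; case: (y' \in F p.1) => /=; lia.
have Fmem z u : u \in F z -> [/\ E u z, u \notin VM & u != c].
  by rewrite /F in_set => /and3P.
move: yF; rewrite in_setD1 => /andP [yy' /Fmem [yp yV yc]].
case/Fmem: y'F => y'p y'V y'c.
apply: (@swap p (y, p.1) (y', p.2)) => //.
- by rewrite /good /= yp p1c.
- by rewrite /good /= y'p y'c andbT; case/and3P: gp.
- case/andP: (notVM yV pM) => h1 h2; case/andP: (notVM y'V pM) => h3 h4.
  by rewrite /disj /= yy' h2 eq_sym h3 good12.
- move=> r rM rp; have pr : p != r by rewrite eq_sym.
  case/and4P: (disjM pM rM pr) => h1 h2 h3 h4.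
  case/andP: (notVM yV rM) => h5 h6; case/andP: (notVM y'V rM) => h7 h8.
  by rewrite /disj /= h1 h2 h3 h4 h5 h6 h7 h8.
Qed.

Lemma inlow a : E a c -> a \notin VM -> indeg a <= #|VM|.+1.
Proof.
move=> ac aV; apply: (@leq_trans #|c |: VM|); last by rewrite cardsU1 cnotVM.
rewrite /indeg subset_leq_card //; apply/subsetP => u; rewrite in_set in_setU1 => ua.
by case: (eqVneq u c) => //= uc; exact: C1 ac aV ua uc.
Qed.

Lemma bigA : #|[set a | E a c & 2 * l <= indeg a]| <= #|M|.
Proof.
pose g a := odflt (c, c) [pick p in M | (p.1 == a) || (p.2 == a)].
have inV a : a \in [set a | E a c & 2 * l <= indeg a] -> a \in VM.
  rewrite inE => /andP [ac ba]; apply: contraT => aV.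
  have := inlow ac aV; have := cardVM; lia.
have gP a : a \in VM -> g a \in M /\ ((g a).1 = a \/ (g a).2 = a).
  move=> /VMP [p pM pe]; rewrite /g; case: pickP => [q /andP [qM] /orP [] /eqP qe|] /=.
  - by split => //; left.
  - by split => //; right.
  by move/(_ p); rewrite pM /=; case: pe => ->; rewrite eqxx ?orbT.
rewrite -(@card_in_imset _ _ g).
  apply: subset_leq_card; apply/subsetP => q /imsetP [a aB ->].
  by case: (gP _ (inV _ aB)).
move=> a a' aB a'B e; apply/eqP; apply: contraT => aa'; exfalso.
case: (gP _ (inV _ aB)) => gM ga; case: (gP _ (inV _ a'B)) => _ ga'.
move: aB a'B; rewrite !inE => /andP [ac ba] /andP [a'c ba'].
rewrite -e in ga'.
case: ga => h0; case: ga' => h1.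
- by move: aa'; rewrite -h0 -h1 eqxx.
- by apply: (C3 gM); rewrite ?h0 ?h1.
- by apply: (C3 gM); rewrite ?h0 ?h1.
- by move: aa'; rewrite -h0 -h1 eqxx.
Qed.

Lemma hbound (x : V) : #|[set a in [set a | E a c & a \notin VM] | E x a]| <= D.
Proof.
rewrite -(outD x); apply: subset_leq_card; apply/subsetP => a.
by rewrite !in_set => /andP [_ ->].
Qed.

Lemma pairbound p : 1 < D -> p \in M ->
  #|[set a in [set a | E a c & a \notin VM] | E p.1 a]| +
  #|[set a in [set a | E a c & a \notin VM] | E p.2 a]| <= D.
Proof.
move=> D2 pM.
set H1 := [set a in _ | E p.1 a]; set H2 := [set a in _ | E p.2 a].
have [e1|/set0Pn [w wH1]] := eqVneq H1 set0.
  by rewrite e1 cards0 add0n hbound.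
have [e2|/set0Pn [w' wH2]] := eqVneq H2 set0.
  by rewrite e2 cards0 addn0 hbound.
have mem u z : u \in [set a in [set a | E a c & a \notin VM] | E z a] ->
    [/\ E u c, u \notin VM & E z u].
  by rewrite in_set => /andP []; rewrite in_set => /andP [].
have s1 : H1 \subset [set w'].
  apply/subsetP => u /mem [uc uV pu]; case/mem: wH2 => w'c w'V pw'.
  by rewrite in_set1 (C2 pM uc uV w'c w'V pu pw').
have s2 : H2 \subset [set w].
  apply/subsetP => u /mem [uc uV pu]; case/mem: wH1 => wc wV pw.
  by rewrite in_set1 (C2 pM wc wV uc uV pw pu).
have := subset_leq_card s1; have := subset_leq_card s2; rewrite !cards1; lia.
Qed.

Lemma smallsum : 1 < D ->
  \sum_(a | E a c && (indeg a < 2 * l)) indeg a <= #|M|.+1 * D + #|VM| * (2 * l).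
Proof.
move=> D2.
rewrite (bigID (fun a => a \in VM)) /= addnC leq_add //.
  pose Fr := [set a | E a c & a \notin VM].
  apply: (@leq_trans (\sum_(a in Fr) indeg a)).
    rewrite big_mkcond [X in _ <= X]big_mkcond; apply: leq_sum => a _.
    by rewrite /Fr in_set; case: (E a c); case: (indeg a < 2 * l); case: (a \notin VM).
  have eq1 : forall a, a \in Fr -> indeg a = #|[set x in c |: VM | E x a]|.
    move=> a; rewrite /Fr in_set => /andP [ac aV]; rewrite /indeg.
    apply: eq_card => u; rewrite [in RHS]in_set in_setU1 [in LHS]in_set.
    case ua: (E u a); rewrite ?andbF // andbT.
    by case: (eqVneq u c) => //= uc; rewrite (C1 ac aV ua uc).
  rewrite (eq_bigr _ eq1) -(dc E (c |: VM) Fr) big_setU1 ?cnotVM //=.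
  rewrite mulSn leq_add ?hbound //.
  apply: leq_trans (sum_setU_le _ _ _) _.
  have inj1 : {in M &, injective (fun p : V * V => p.1)}.
    move=> p q pM qM e; apply/eqP; apply: contraT => pq.
    by case/and4P: (disjM pM qM pq); rewrite e eqxx.
  have inj2 : {in M &, injective (fun p : V * V => p.2)}.
    move=> p q pM qM e; apply/eqP; apply: contraT => pq.
    by case/and4P: (disjM pM qM pq) => _ _ _; rewrite e eqxx.
  rewrite (big_imset _ inj1) (big_imset _ inj2) /= -big_split /=.
  rewrite -sum_nat_const; apply: leq_sum => p pM; exact: pairbound.
rewrite -sum_nat_const big_mkcond [X in _ <= X]big_mkcond; apply: leq_sum => a _.
case: (a \in VM); rewrite ?andbT ?andbF //.
case: (E a c) => //=; case: ifP => // h; lia.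
Qed.

End PerC.
Section Global.
Variables (l D : nat).
Hypotheses (outD : forall v, #|[set w | E v w]| = D) (l1 : 0 < l)
  (HD : 2 * l * D + 4 * (l * l) <= D * D) (Vn : 0 < #|V|).

Definition Mx c := [arg max_(M > (set0 : {set V * V}) | matching c M) #|M|].

Lemma set0_match c : matching c set0.
Proof. by apply: matchingI => p; rewrite in_set0. Qed.

Lemma Mx_match c : matching c (Mx c).
Proof. by rewrite /Mx; case: (@arg_maxnP _ set0 (matching c) (fun M => #|M|) (set0_match c)). Qed.

Lemma Mx_max c M : matching c M -> #|M| <= #|Mx c|.
Proof. by rewrite /Mx; case: (@arg_maxnP _ set0 (matching c) (fun M => #|M|) (set0_match c)) => M0 _ h /h. Qed.

Definition Bs := [set a | 2 * l <= indeg a].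
Definition Ss := [set a | indeg a < 2 * l].

Lemma BS_part (R : pred V) :
  #|[set y in Bs | R y]| + #|[set y in Ss | R y]| = #|[set y | R y]|.
Proof.
rewrite !card_sum card_sum' [RHS](bigID (fun y => 2 * l <= indeg y)) /=.
by congr (_ + _); apply: eq_bigl => y; rewrite in_set // ltnNge.
Qed.

Theorem main_exact : contains_subgraph (@instar_edge 2 l) E.
Proof.
case: (boolP [exists c, l <= #|Mx c|]).
  by case/existsP => c h; exact: (embed (Mx_match c) h).
rewrite negb_exists => /forallP H.
have Hk c : #|Mx c| < l by rewrite ltnNge; exact: H c.
have D2l : 2 * l < D by nia.
pose W c := \sum_(a | E a c && (indeg a < 2 * l)) indeg a.
have Wb c : W c <= l * D + 4 * l * (l - 1).
  have := smallsum outD (Mx_match c) (@Mx_max c) (Hk c) (ltn_trans _ D2l).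
  have := cardVM (Mx c); have := Hk c.
  rewrite /W; move: (#|Mx c|) (#|VM (Mx c)|) => k v hk hv hs.
  have h2 : 1 < 2 * l by lia.
  apply: (leq_trans (hs h2)); nia.
have betab c : #|[set x in Bs | E x c]| <= l - 1.
  have := bigA (Mx_match c) (@Mx_max c) (Hk c); have := Hk c.
  have -> : #|[set x in Bs | E x c]| = #|[set a | E a c & 2 * l <= indeg a]|.
    by apply: eq_card => x; rewrite !in_set andbC.
  lia.
pose dS a := #|[set y in Ss | E a y]|.
pose dB a := #|[set y in Bs | E a y]|.
pose inS a := #|[set x in Ss | E x a]|.
pose inB a := #|[set x in Bs | E x a]|.
have dBS a : dB a + dS a = D by rewrite /dB /dS (BS_part (E a)) outD.
have inBS a : inB a + inS a = indeg a by rewrite /inB /inS (BS_part (fun x => E x a)).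
have Bn : 0 < #|Bs|.
  rewrite card_gt0; apply: contraT; rewrite negbK => /eqP B0.
  have e1 : \sum_(x in [set: V]) #|[set y in [set: V] | E x y]| = D * #|V|.
    rewrite mulnC -sum_nat_const; apply: eq_big => x; rewrite ?in_setT //.
    by move=> _; rewrite -(outD x); apply: eq_card => y; rewrite !inE.
  have e2 : \sum_(y in [set: V]) #|[set x in [set: V] | E x y]| <= #|V| * (2 * l).
    rewrite -cardsT -sum_nat_const; apply: leq_sum => y _.
    have : y \notin Bs by rewrite B0 in_set0.
    rewrite in_set -ltnNge => h.
    have -> : #|[set x in [set: V] | E x y]| = indeg y by apply: eq_card => x; rewrite !inE.
    exact: ltnW.
  rewrite (dc E [set: V] [set: V]) in e1; rewrite e1 in e2.
  have : 2 * l * #|V| < D * #|V| by rewrite ltn_pmul2r.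
  lia.
pose P := \sum_(c in Bs) W c.
have P1 : P = \sum_(a in Ss) indeg a * dB a.
  have eW c : W c = \sum_(a in Ss) (E a c) * indeg a.
    rewrite /W big_mkcond [RHS]big_mkcond; apply: eq_bigr => a _.
    by rewrite in_set; case: (E a c); case: (indeg a < 2 * l); rewrite ?mul1n.
  rewrite /P (eq_bigr _ (fun c _ => eW c)) exchange_big /=; apply: eq_bigr => a _.
  by rewrite /dB card_sum big_distrr /=; apply: eq_bigr => c _; rewrite mulnC.
have P2 : D * \sum_(a in Ss) indeg a <= P + D * \sum_(a in Ss) dS a.
  rewrite P1 !big_distrr -big_split /=; apply: leq_sum => a.
  rewrite in_set => h; have := dBS a; have hD : indeg a <= D by lia.
  move: (dB a) (dS a) (indeg a) hD => x y z hz hxy.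
  rewrite -hxy; nia.
have P3 : \sum_(a in Ss) indeg a = \sum_(b in Bs) dS b + \sum_(a in Ss) dS a.
  rewrite -(eq_bigr _ (fun a _ => inBS a)) big_split /=; congr (_ + _).
    by rewrite /inB /dS -(dc E Bs Ss).
  by rewrite /inS /dS -(dc E Ss Ss).
have P6 : \sum_(b in Bs) dB b + \sum_(b in Bs) dS b = D * #|Bs|.
  by rewrite -big_split /= (eq_bigr _ (fun b _ => dBS b)) sum_nat_const mulnC.
have P7 : \sum_(b in Bs) dB b <= (l - 1) * #|Bs|.
  rewrite /dB (dc E Bs Bs) mulnC -sum_nat_const; apply: leq_sum => c _; exact: betab.
have P8 : P <= #|Bs| * (l * D + 4 * l * (l - 1)).
  by rewrite -sum_nat_const; apply: leq_sum => c _; exact: Wb.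
clear P1; move: P2 P3 P6 P7 P8 Bn.
move: (\sum_(a in Ss) indeg a) (\sum_(b in Bs) dS b) (\sum_(a in Ss) dS a) (\sum_(b in Bs) dB b) P #|Bs|.
move=> a b c d p x h1 h2 h3 h4 h5 h6.
have hb : D * b <= p by rewrite h2 mulnDr in h1; lia.
have hx : x * (D * D) <= x * (D * (l - 1) + (l * D + 4 * l * (l - 1))).
  have : D * (d + b) <= D * ((l - 1) * x) + p by rewrite mulnDr leq_add // leq_mul2l h4 orbT.
  rewrite h3; nia.
rewrite leq_pmul2l // in hx; nia.
Qed.

End Global.

End Main.

From Stdlib Require Import Lra Lia.

Lemma real_to_nat (l D : nat) :
  Rle (Rmult (Rplus 1 (sqrt 5)) (INR l)) (INR D) ->
  2 * l * D + 4 * (l * l) <= D * D.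
Proof.
move=> H.
have s5 : Rmult (sqrt 5) (sqrt 5) = IZR 5 by apply: sqrt_sqrt; lra.
have s0 : Rle 0 (sqrt 5) := sqrt_pos (IZR 5).
have m0 : Rle 0 (INR l) := pos_INR l.
have h1 : Rle (Rmult (sqrt 5) (INR l)) (Rminus (INR D) (INR l)) by lra.
have h2 : Rle 0 (Rmult (sqrt 5) (INR l)) by apply: Rmult_le_pos.
have h3 := Rmult_le_compat _ _ _ _ h2 h2 h1 h1.
have h4 : Rmult (Rmult (sqrt 5) (INR l)) (Rmult (sqrt 5) (INR l)) =
    Rmult (Rmult (sqrt 5) (sqrt 5)) (Rmult (INR l) (INR l)) by ring.
rewrite h4 s5 in h3.
apply/leP; apply: INR_le.
rewrite -!multE -!plusE !plus_INR !mult_INR.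
change (INR 2) with (IZR 2); change (INR 0) with (IZR 0).
nra.
Qed.

Theorem theorem1p8 (l : nat) (V : finType) (E : rel V) :
  (1 <= l)%N ->
  (0 < #|V|)%N ->
  irreflexive E ->
  (forall v : V, Rle (Rmult (Rplus 1 (sqrt 5)) (INR l)) (INR (outdeg E v))) ->
  contains_subgraph (@instar_edge 2 l) E.
Proof.
move=> l1 Vn irrE Hv.
have [v0 _] := card_gt0P Vn.
pose vm := [arg min_(v < v0) outdeg E v].
have Hmin : forall v, outdeg E vm <= outdeg E v.
  by rewrite /vm; case: arg_minnP => // v _ h u; apply: h.
pose D := outdeg E vm.
have HD : 2 * l * D + 4 * (l * l) <= D * D by apply: real_to_nat; apply: Hv.
pose E' := fun u w : V => w \in take D (enum [set x | E u x]).
have sub u w : E' u w -> E u w.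
  by rewrite /E' => /mem_take; rewrite mem_enum in_set.
have irr' : irreflexive E'.
  by move=> u; apply/negP => /sub; rewrite irrE.
have outD : forall v, #|[set w | E' v w]| = D.
  move=> v; set s := take D (enum [set x | E v x]).
  have us : uniq s by rewrite take_uniq // enum_uniq.
  rewrite -(size_takel (s := enum [set x | E v x]) (n0 := D)); last first.
    by rewrite -cardE; apply: Hmin.
  rewrite -/s -(card_uniqP us); apply: eq_card => w; by rewrite in_set.
have [f [finj fE]] := main_exact irr' outD l1 HD Vn.
exists f; split => // u v h; apply: sub; exact: fE.
Qed.
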